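(* Let $n\ge 1$, let $z_1,\dots,z_n\in\mathbb{C}$ be pairwise distinct, let $k_1,\dots,k_n\ge 0$ be integers, let $\beta_1,\dots,\beta_n\in\mathbb{C}$ and $\alpha_i^{(j)}\in\mathbb{C}$ ($j=1,\dots,n$, $i=1,\dots,k_j$), and set $m=\sum_{j=1}^n (k_j+1)$. For each $j$ let $J_{j,k_j}\in\mathbb{C}^{(k_j+1)\times(k_j+1)}$ be the upper bidiagonal matrix with diagonal entries $z_j$ and superdiagonal entries, from top to bottom, $\alpha_{k_j}^{(j)},\dots,\alpha_1^{(j)}$. Let $Z=J_{1,k_1}\oplus\cdots\oplus J_{n,k_n}\in\mathbb{C}^{m\times m}$ (block diagonal) and $w=\begin{bmatrix}\beta_1 e_{k_1+1}^\top & \cdots & \beta_n e_{k_n+1}^\top\end{bmatrix}^\top\in\mathbb{C}^m$, where $e_{k_j+1}=(0,\dots,0,1)^\top\in\mathbb{R}^{k_j+1}$. Let $k,\ell\le m$, let $x\in\mathcal{K}_k(Z,w)$ and $y\in\mathcal{K}_\ell(Z,w)$, and let $p\in\mathcal{P}_k$ and $q\in\mathcal{P}_\ell$ be polynomials with $p(Z)w=x$ and $q(Z)w=y$. Then $$y^H x = \sum_{j=1}^n |\beta_j|^2\left(\sum_{r=0}^{k_j}\left|\frac{\prod_{i=1}^{r}\alpha_i^{(j)}}{r!}\right|^2 \overline{q^{(r)}(z_j)}\, p^{(r)}(z_j)\right).$$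
   Context: $\mathcal{P}_k$ denotes the space of polynomials with complex coefficients of degree at most $k$. For $A\in\mathbb{C}^{m\times m}$ and $v\in\mathbb{C}^m$, the Krylov subspace is $\mathcal{K}_k(A,v)=\mathrm{span}\{v,Av,\dots,A^{k-1}v\}$. $y^H$ denotes the conjugate transpose of $y$. An empty product equals $1$. *)

(* Defs.v *)
(* Complex numbers: an arbitrary numClosedFieldType C
   (e.g. algC, or R[i] for a real closed field R); conjugation z^*, modulus `|z|. *)
From HB Require Import structures.
From mathcomp Require Import all_boot all_order all_algebra.
Set Implicit Arguments. Unset Strict Implicit. Unset Printing Implicit Defensive.
Import Order.TTheory GRing.Theory Num.Theory.
Local Open Scope ring_scope.

Definition poly_mx (C : comNzRingType) (m : nat) (p : {poly C}) (A : 'M[C]_m)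
  : 'M[C]_m := \sum_(i < size p) p`_i *: A ^+ i.

Definition in_krylov (C : comNzRingType) (m k : nat) (A : 'M[C]_m)
  (v x : 'cV[C]_m) : Prop :=
  exists c : 'I_k -> C, x = \sum_(i < k) c i *: (A ^+ i *m v).

Definition jordan_like (C : comNzRingType) (kj : nat) (z : C) (alpha : nat -> C)
  : 'M[C]_(kj.+1) :=
  \matrix_(r < kj.+1, s < kj.+1)
    (if r == s :> nat then z
     else if s == r.+1 :> nat then alpha (kj - r)%N else 0).

Definition Zmat (C : comNzRingType) (n : nat) (k : 'I_n -> nat) (z : 'I_n -> C)
  (alpha : 'I_n -> nat -> C) : 'M[C]_(\sum_(j < n) (k j).+1) :=
  \mxdiag_(j < n) jordan_like (k j) (z j) (alpha j).

Definition wvec (C : comNzRingType) (n : nat) (k : 'I_n -> nat) (beta : 'I_n -> C)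
  : 'cV[C]_(\sum_(j < n) (k j).+1) :=
  \mxcol_(j < n) (beta j *: delta_mx (ord_max : 'I_(k j).+1) (0 : 'I_1)).

Definition herm_dot (C : numClosedFieldType) (m : nat) (y x : 'cV[C]_m) : C :=
  \sum_(i < m) (y i 0)^* * x i 0.

(* Main.v *)
Require Import Defs.
From HB Require Import structures.
From mathcomp Require Import all_boot all_order all_algebra zify ring.
Import Order.TTheory GRing.Theory Num.Theory.
Local Open Scope ring_scope.
Set Implicit Arguments. Unset Strict Implicit.

Lemma poly_mx_horner (C : comNzRingType) (m : nat) (p : {poly C}) (A : 'M[C]_m.+1) :
  poly_mx p A = (map_poly (@scalar_mx C m.+1) p).[A].
Proof.
have inj : injective (@scalar_mx C m.+1).
  by move=> a b /matrixP /(_ 0 0); rewrite !mxE eqxx.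
rewrite horner_coef size_map_inj_poly //; last by apply/matrixP => i j; rewrite !mxE mul0rn.
rewrite /poly_mx; apply: eq_bigr => i _.
by rewrite coef_map /= -mulmxE mul_scalar_mx.
Qed.

Definition Nmat (C : comNzRingType) (kj : nat) (alpha : nat -> C) : 'M[C]_(kj.+1) :=
  \matrix_(r < kj.+1, s < kj.+1) (if s == r.+1 :> nat then alpha (kj - r)%N else 0).

Lemma jordan_split (C : comNzRingType) kj (z : C) alpha :
  jordan_like kj z alpha = z%:M + Nmat kj alpha.
Proof.
apply/matrixP => r s; rewrite !mxE.
case E: (r == s :> nat).
  rewrite (_ : (r == s) = true) // mulr1n.
  have -> : (s == r.+1 :> nat) = false by move/eqP: E => ->; apply/negbTE; lia.
  by rewrite addr0.
by rewrite (_ : (r == s) = false) // mulr0n add0r.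
Qed.

Definition Pr (C : comNzRingType) (alpha : nat -> C) (s : nat) : C :=
  \prod_(1 <= i < s.+1) alpha i.

Definition vcol (C : comNzRingType) kj (alpha : nat -> C) s : 'cV[C]_(kj.+1) :=
  \col_r (if (r + s == kj)%N then Pr alpha s else 0).

Lemma Nmat_v (C : comNzRingType) kj (alpha : nat -> C) s :
  Nmat kj alpha *m vcol kj alpha s = vcol kj alpha s.+1.
Proof.
apply/matrixP => r c; rewrite !mxE.
under eq_bigr do rewrite !mxE.
case: (boolP (r + s.+1 == kj)%N) => [/eqP E|NE].
  have lt : (r.+1 < kj.+1)%N by lia.
  rewrite (bigD1 (Ordinal lt)) //= big1 ?addr0.
    rewrite eqxx addSnnS E eqxx /Pr [in RHS]big_nat_recr //=.
    have -> : (kj - r = s.+1)%N by lia.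
    by rewrite mulrC.
  move=> i ne; case: eqP => [Ei|]; last by rewrite mul0r.
  by exfalso; move/eqP: ne; apply; apply: val_inj => /=.
rewrite big1 // => i _; case: eqP => [Ei|]; last by rewrite mul0r.
case: eqP => [Ei2|]; last by rewrite mulr0.
by exfalso; move/negP: NE; apply; apply/eqP; lia.
Qed.

Lemma Nmat_pow (C : comNzRingType) kj (alpha : nat -> C) s :
  Nmat kj alpha ^+ s *m delta_mx ord_max 0 = vcol kj alpha s.
Proof.
elim: s => [|s IH].
  rewrite expr0 mul1mx; apply/matrixP => r c; rewrite !mxE /Pr ?big_geq // ?addn0 (ord1 c) andbT.
  by have -> : (r == ord_max) = (r == kj :> nat) by []; case: eqP.
by rewrite exprS -mulmxE -mulmxA IH Nmat_v.
Qed.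

Lemma collapse (C : comNzRingType) kj W (r : 'I_kj.+1) (F G : nat -> C) :
  (kj < W)%N ->
  \sum_(i < W) F i * (if (r + i == kj)%N then G i else 0) = F (kj - r)%N * G (kj - r)%N.
Proof.
move=> hW; have lt : (kj - r < W)%N by lia.
rewrite (bigD1 (Ordinal lt)) //= big1 ?addr0.
  by have -> : (r + (kj - r) == kj)%N by apply/eqP; have := ltn_ord r; lia.
move=> i ne; case: eqP => [E|]; last by rewrite mulr0.
by exfalso; move/eqP: ne; apply; apply: val_inj => /=; lia.
Qed.

Lemma block_col (C : comNzRingType) kj (z : C) alpha beta (p : {poly C}) W :
  (size p <= W)%N -> (kj < W)%N ->
  poly_mx p (jordan_like kj z alpha) *m (beta *: delta_mx ord_max 0) =
  \col_r (beta * ((p^`N(kj - r)).[z] * Pr alpha (kj - r)%N)).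
Proof.
move=> hp hW.
rewrite poly_mx_horner jordan_split (nderiv_taylor_wide (n:=W) _ _); last first.
  rewrite size_map_inj_poly //; last by apply/matrixP => i j; rewrite !mxE mul0rn.
  by move=> a b /matrixP /(_ 0 0); rewrite !mxE eqxx.
  by rewrite /GRing.comm -!mulmxE scalar_mxC.
rewrite -scalemxAr mulmx_suml.
under eq_bigr do rewrite nderivn_map horner_map /= -mulmxE -mulmxA mul_scalar_mx.
under eq_bigr do rewrite Nmat_pow.
apply/matrixP => r c; rewrite !mxE summxE.
under eq_bigr do rewrite !mxE.
by rewrite (collapse r (fun i => (p^`N(i)).[z]) (Pr alpha)) //.
Qed.

Lemma Zpow_w (C : comNzRingType) n (kk : 'I_n -> nat) (z : 'I_n -> C) (alpha : 'I_n -> nat -> C) (beta : 'I_n -> C) i :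
  Zmat kk z alpha ^+ i *m wvec kk beta =
  \mxcol_j (jordan_like (kk j) (z j) (alpha j) ^+ i *m (beta j *: delta_mx ord_max 0)).
Proof.
elim: i => [|i IH].
  by rewrite expr0 mul1mx /wvec; apply: eq_mxcol => j; rewrite expr0 mul1mx.
rewrite exprS -mulmxE -mulmxA IH /Zmat mul_mxdiag_mxcol.
by apply: eq_mxcol => j; rewrite exprS -mulmxE mulmxA.
Qed.

Lemma polyZ_w (C : comNzRingType) n (kk : 'I_n -> nat) (z : 'I_n -> C) (alpha : 'I_n -> nat -> C) (beta : 'I_n -> C) p :
  poly_mx p (Zmat kk z alpha) *m wvec kk beta =
  \mxcol_j (poly_mx p (jordan_like (kk j) (z j) (alpha j)) *m (beta j *: delta_mx ord_max 0)).
Proof.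
rewrite /poly_mx (mulmx_suml (wvec kk beta)).
rewrite (eq_bigr (fun i : 'I_(size p) => \mxcol_j (p`_i *: (jordan_like (kk j) (z j) (alpha j) ^+ i *m (beta j *: delta_mx ord_max 0))))); last first.
  move=> i _.
  have H : p`_i *: Zmat kk z alpha ^+ i *m wvec kk beta =
   p`_i *: (Zmat kk z alpha ^+ i *m wvec kk beta) by rewrite scalemxAl.
  rewrite H Zpow_w; apply/matrixP => r c; rewrite !mxE.
  by [].
rewrite -mxcol_sum; apply: eq_mxcol => j; rewrite mulmx_suml; apply: eq_bigr => i _.
by rewrite scalemxAl.
Qed.

Lemma herm_mxcol (C : numClosedFieldType) n (p_ : 'I_n -> nat)
  (Y X : forall j, 'cV[C]_(p_ j)) :
  herm_dot (\mxcol_j Y j) (\mxcol_j X j) = \sum_j herm_dot (Y j) (X j).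
Proof.
have E : forall m (u v : 'cV[C]_m), herm_dot u v = ((map_mx (fun x : C => x^*) u)^T *m v) 0 0.
  by move=> m u v; rewrite /herm_dot !mxE; apply: eq_bigr => i _; rewrite !mxE.
rewrite E.
have -> : map_mx (fun x : C => x^*) (\mxcol_j Y j) = \mxcol_j (map_mx (fun x : C => x^*) (Y j)).
  by apply/matrixP => i j; rewrite !mxE.
rewrite tr_mxcol mul_mxrow_mxcol summxE.
by apply: eq_bigr => j _; rewrite E.
Qed.

Lemma alg (C : numClosedFieldType) (b Q P0 Pp : C) (N : nat) : (N%:R : C) != 0 ->
  (b * (Q * P0))^* * (b * (Pp * P0)) =
  b^* * b * ((P0 / N%:R)^* * (P0 / N%:R) * (Q *+ N)^* * (Pp *+ N)).
Proof.
move=> hN.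
rewrite !(rmorphM Num.conj_op) !(rmorphMn Num.conj_op) (fmorphV Num.conj_op).
rewrite (rmorph_nat Num.conj_op) -[Q^* *+ N]mulr_natr -[Pp *+ N]mulr_natr.
by field.
Qed.

Theorem theorem1 (C : numClosedFieldType) (n : nat) (hn : (1 <= n)%N)
  (z : 'I_n -> C) (hz : injective z) (kk : 'I_n -> nat)
  (beta : 'I_n -> C) (alpha : 'I_n -> nat -> C)
  (k l : nat) (hk : (k <= \sum_(j < n) (kk j).+1)%N)
  (hl : (l <= \sum_(j < n) (kk j).+1)%N)
  (x y : 'cV[C]_(\sum_(j < n) (kk j).+1))
  (hx : in_krylov k (Zmat kk z alpha) (wvec kk beta) x)
  (hy : in_krylov l (Zmat kk z alpha) (wvec kk beta) y)
  (p q : {poly C}) (hp : (size p <= k.+1)%N) (hq : (size q <= l.+1)%N)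
  (hpx : poly_mx p (Zmat kk z alpha) *m wvec kk beta = x)
  (hqy : poly_mx q (Zmat kk z alpha) *m wvec kk beta = y) :
  herm_dot y x =
  \sum_(j < n) `|beta j| ^+ 2 *
    (\sum_(r < (kk j).+1)
       `|(\prod_(1 <= i < r.+1) alpha j i) / (r`!)%:R| ^+ 2 *
       ((q^`(r)).[z j])^* * (p^`(r)).[z j]).
Proof.
rewrite -hpx -hqy !polyZ_w herm_mxcol; apply: eq_bigr => j _.
have h1 : (size p <= size p + size q + (kk j).+1)%N by lia.
have h2 : (size q <= size p + size q + (kk j).+1)%N by lia.
have h3 : (kk j < size p + size q + (kk j).+1)%N by lia.
rewrite (@block_col _ (kk j) (z j) (alpha j) (beta j) p _ h1 h3) (@block_col _ (kk j) (z j) (alpha j) (beta j) q _ h2 h3) /herm_dot.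
under eq_bigr do rewrite !mxE.
rewrite mulr_sumr (reindex_inj rev_ord_inj) /=; apply: eq_bigr => r _.
have hr : (r <= kk j)%N by have := ltn_ord r; lia.
rewrite subnS subSKn ?subKn //.
rewrite !nderivn_def !hornerMn !normCKC.
have hf : (r`!%:R : C) != 0 by rewrite pnatr_eq0 -lt0n fact_gt0.
exact: alg.
Qed.
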